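(* Let $f:2^{\mathcal{E}_x}\to\mathbb{R}_{\ge 0}$ be normalized, monotone and submodular, let $\Delta\ge1$ be the maximum vertex degree of $\mathcal{G}$, and consider $(\mathrm{P}_1)$ under the constraint TU$_b$ (i.e., maximize $f(\mathcal{E})$ over $\mathcal{E}\subseteq\mathcal{E}_x$ with $|\mathcal{E}|\le k$ and some vertex cover $\mathcal{V}$ of $\mathcal{E}$ with $|\mathcal{V}|\le b$), with optimal value $\mathrm{OPT}_1$. Then the algorithm Vertex-Greedy (described in the context) returns a feasible solution $\mathcal{E}_{\mathrm{grd}}$ of this problem with $f(\mathcal{E}_{\mathrm{grd}})\ge\alpha_v(b,k,\Delta)\cdot\mathrm{OPT}_1$, where $\alpha_v(b,k,\Delta)=1-\exp\big(-\min\{1,\lfloor k/\Delta\rfloor/b\}\big)$.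
   Context: $\mathcal{G}=(\mathcal{V}_x,\mathcal{E}_x)$ is a finite simple undirected graph; $b,k\ge1$ are integers. For $\mathcal{V}\subseteq\mathcal{V}_x$, $\mathsf{edges}(\mathcal{V})$ is the set of edges incident to at least one vertex of $\mathcal{V}$. A set function $h$ is normalized if $h(\varnothing)=0$, monotone if $h(A)\le h(B)$ for $A\subseteq B$, submodular if $h(A)+h(B)\ge h(A\cup B)+h(A\cap B)$. Vertex-Greedy: let $h(\mathcal{V})=f(\mathsf{edges}(\mathcal{V}))$. Start with $\mathcal{V}_{\mathrm{grd}}=\varnothing$ and repeat: pick $v^\star\in\arg\max_{v\in\mathcal{V}_x\setminus\mathcal{V}_{\mathrm{grd}}}h(\mathcal{V}_{\mathrm{grd}}\cup\{v\})$; if $|\mathcal{V}_{\mathrm{grd}}\cup\{v^\star\}|>b$ or $|\mathsf{edges}(\mathcal{V}_{\mathrm{grd}}\cup\{v^\star\})|>k$ (or no vertex remains), stop; otherwise set $\mathcal{V}_{\mathrm{grd}}\leftarrow\mathcal{V}_{\mathrm{grd}}\cup\{v^\star\}$. Return $\mathcal{V}_{\mathrm{grd}}$ and $\mathcal{E}_{\mathrm{grd}}=\mathsf{edges}(\mathcal{V}_{\mathrm{grd}})$. *)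

(* Defs.v *)
From Stdlib Require Import Reals.
From mathcomp Require Import all_boot.
Set Implicit Arguments. Unset Strict Implicit. Unset Printing Implicit Defensive.

Section Defs.
Variables (T : finType) (e : rel T).

Definition edges_x : {set {set T}} :=
  [set E : {set T} | [exists x, [exists y, e x y && (E == [set x; y])]]].

Definition edges_of (V : {set T}) : {set {set T}} :=
  [set E in edges_x | [exists v in V, v \in E]].

Definition covers (V : {set T}) (E : {set {set T}}) : Prop :=
  forall E0, E0 \in E -> exists2 v, v \in V & v \in E0.

Definition max_degree : nat := \max_(v : T) #|[set u | e v u]|.

Definition feasible (b k : nat) (E : {set {set T}}) : Prop :=
  E \subset edges_x /\ #|E| <= k /\ exists2 V : {set T}, #|V| <= b & covers V E.

Variables (f : {set {set T}} -> R) (b k : nat).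

Definition h (V : {set T}) : R := f (edges_of V).

Definition greedy_choice (cur : {set T}) (v : T) : Prop :=
  v \notin cur /\ forall u, u \notin cur -> Rle (h (cur :|: [set u])) (h (cur :|: [set v])).

(* Sets reachable by accepted greedy steps (any tie-breaking). *)
Inductive greedy_reach : {set T} -> Prop :=
| greedy_start : greedy_reach set0
| greedy_next cur v : greedy_reach cur -> greedy_choice cur v ->
    #|cur :|: [set v]| <= b -> #|edges_of (cur :|: [set v])| <= k ->
    greedy_reach (cur :|: [set v]).

Definition greedy_output (V : {set T}) : Prop :=
  greedy_reach V /\
  ((forall u, u \in V) \/
   exists v, greedy_choice V v /\
     (b < #|V :|: [set v]| \/ k < #|edges_of (V :|: [set v])|)).

End Defs.

Definition alpha_v (b k Delta : nat) : R :=
  Rminus 1 (exp (Ropp (Rmin 1 (Rdiv (INR (k %/ Delta)) (INR b))))).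

(* Main.v *)
Require Import Defs.
From Stdlib Require Import Reals Lra.
From mathcomp Require Import all_boot.
Delimit Scope R_scope with Re.
Set Implicit Arguments. Unset Strict Implicit.

Section Aux.
Variables (T : finType) (e : rel T).
Hypothesis e_sym : symmetric e.
Variable f : {set {set T}} -> R.
Hypothesis f_mono : forall A B : {set {set T}}, B \subset edges_x e -> A \subset B -> Rle (f A) (f B).
Hypothesis f_submod : forall A B : {set {set T}}, A \subset edges_x e -> B \subset edges_x e ->
      Rle (Rplus (f (A :|: B)) (f (A :&: B))) (Rplus (f A) (f B)).

Lemma eo_sub (V : {set T}) : edges_of e V \subset edges_x e.
Proof. by apply/subsetP=> E; rewrite inE => /andP[]. Qed.

Lemma eo_mono (A B : {set T}) : A \subset B -> edges_of e A \subset edges_of e B.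
Proof.
move=> AB; apply/subsetP=> E; rewrite !inE => /andP[-> /existsP[v /andP[vA vE]]].
by apply/existsP; exists v; rewrite (subsetP AB).
Qed.

Lemma eoU (A B : {set T}) : edges_of e (A :|: B) = edges_of e A :|: edges_of e B.
Proof.
apply/setP=> E; rewrite !inE -andb_orr; congr (_ && _).
apply/existsP/orP => [[v /andP[]]|].
  by rewrite inE => /orP[vA vE|vB vE]; [left|right]; apply/existsP; exists v; rewrite ?vA ?vB.
by case=> /existsP[v /andP[vX vE]]; exists v; rewrite inE vX ?orbT.
Qed.

Lemma eo0 : edges_of e set0 = set0.
Proof.
apply/setP=> E; rewrite !inE; apply/negbTE; apply/andP=> [[_ /existsP[v]]].
by rewrite inE.
Qed.

Lemma h_mono (A B : {set T}) : A \subset B -> Rle (h e f A) (h e f B).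
Proof. move=> AB; apply: f_mono; [exact: eo_sub | exact: eo_mono]. Qed.

Lemma h_sub (A B C : {set T}) : C \subset A -> C \subset B ->
  Rle (Rplus (h e f (A :|: B)) (h e f C)) (Rplus (h e f A) (h e f B)).
Proof.
move=> CA CB; rewrite /h eoU.
have H1 := f_submod (eo_sub A) (eo_sub B).
have H2 : Rle (f (edges_of e C)) (f (edges_of e A :&: edges_of e B)).
  apply: f_mono; first by apply: subset_trans (eo_sub A); apply: subsetIl.
  by rewrite subsetI !eo_mono.
lra.
Qed.

Lemma sum_gain (V : {set T}) (g : R) : (forall u, Rle (h e f (V :|: [set u]) - h e f V) g) ->
  forall n (S : {set T}), #|S| = n -> Rle (h e f (V :|: S)) (h e f V + INR n * g).
Proof.
move=> Hg; elim=> [|n IH] S cS.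
  have -> : S = set0 by apply/eqP; rewrite -cards_eq0 cS.
  rewrite setU0 /=; lra.
have : (0 < #|S|)%N by rewrite cS.
case/card_gt0P=> x xS.
have cS' : #|S :\ x| = n by have := cardsD1 x S; rewrite xS cS add1n => -[].
have IH' := IH _ cS'.
have HS : S = (S :\ x) :|: [set x] by rewrite setUC (setD1K xS).
have Hsub := @h_sub (V :|: (S :\ x)) (V :|: [set x]) V (subsetUl _ _) (subsetUl _ _).
have -> : V :|: S = (V :|: (S :\ x)) :|: (V :|: [set x]).
  by rewrite {1}HS setUACA setUid.
have := Hg x; rewrite S_INR.
move: Hsub IH'; move: (h e f _) (h e f _) (h e f _) (h e f V) => a b c d H1 H2 H3; lra.
Qed.

Lemma deg1 (v : T) : (#|edges_of e [set v]| <= max_degree e)%N.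
Proof.
apply: leq_trans (leq_bigmax v).
apply: (leq_trans _ (leq_imset_card (fun u => [set v; u]) [set u | e v u])).
apply: subset_leq_card; apply/subsetP=> E; rewrite inE => /andP[].
rewrite inE => /existsP[x /existsP[y /andP[exy /eqP ->]]] /existsP[w].
rewrite !inE => /andP[/eqP -> /orP[/eqP ->|/eqP ->]].
  by apply/imsetP; exists y; rewrite ?inE.
by apply/imsetP; exists x; rewrite ?inE 1?setUC // e_sym.
Qed.

Lemma deg_all : forall n (V : {set T}), #|V| = n -> (#|edges_of e V| <= n * max_degree e)%N.
Proof.
elim=> [|n IH] V cV.
  have -> : V = set0 by apply/eqP; rewrite -cards_eq0 cV.
  by rewrite eo0 cards0.
have : (0 < #|V|)%N by rewrite cV.
case/card_gt0P=> x xV.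
have cV' : #|V :\ x| = n by have := cardsD1 x V; rewrite xV cV add1n => -[].
rewrite -(setD1K xV) eoU mulSn.
apply: (leq_trans (leq_card_setU _ _)).
by apply: leq_add; [apply: deg1 | apply: IH].
Qed.

End Aux.

Lemma exp_le' x y : Rle x y -> Rle (exp x) (exp y).
Proof.
move=> H; case: (Rle_lt_or_eq_dec _ _ H) => [H'|->]; [left; exact: exp_increasing | right]; done.
Qed.

Lemma pow_exp (B : R) (t : nat) : Rlt 0 B -> Rle 0 (1 - / B) ->
  Rle ((1 - / B) ^ t) (exp (- (INR t / B))).
Proof.
move=> B0 r0; elim: t => [|t IH].
  have -> : (- (INR 0 / B) = 0)%Re by rewrite /=; field; lra.
  rewrite exp_0 /=; lra.
have -> : (exp (- (INR t.+1 / B)) = exp (- / B) * exp (- (INR t / B)))%Re.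
  by rewrite -exp_plus; f_equal; rewrite S_INR; field; lra.
rewrite /=; apply: Rmult_le_compat => //; first exact: pow_le.
have := exp_ineq1_le (- / B); lra.
Qed.

Lemma INR_leq m n : (m <= n)%N -> Rle (INR m) (INR n).
Proof. by move=> H; apply: le_INR; apply/leP. Qed.
Arguments INR_leq {m n}.

Section Greedy.
Variables (T : finType) (e : rel T).
Variable f : {set {set T}} -> R.
Hypothesis f_norm : f set0 = R0.
Hypothesis f_mono : forall A B : {set {set T}}, B \subset edges_x e -> A \subset B -> Rle (f A) (f B).
Hypothesis f_submod : forall A B : {set {set T}}, A \subset edges_x e -> B \subset edges_x e ->
      Rle (Rplus (f (A :|: B)) (f (A :&: B))) (Rplus (f A) (f B)).
Variables (b k : nat).
Hypothesis hb : (1 <= b)%N.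

Lemma reach_props V : greedy_reach e f b k V -> (#|V| <= b)%N /\ (#|edges_of e V| <= k)%N.
Proof. by case=> [|cur v _ _ H1 H2] //; rewrite cards0 eo0 cards0. Qed.

Lemma card_step (cur : {set T}) v : v \notin cur -> #|cur :|: [set v]| = #|cur|.+1.
Proof. by move=> H; rewrite setUC cardsU1 H. Qed.

Lemma reach_bound (Vs : {set T}) : (#|Vs| <= b)%N -> forall V, greedy_reach e f b k V ->
  Rle (h e f Vs - h e f V) ((1 - / INR b) ^ #|V| * h e f Vs).
Proof.
move=> cVs V; elim=> [|cur v _ IH [vn Hch] _ _].
  rewrite cards0 /h eo0 f_norm /=; lra.
have B1 : Rle 1 (INR b) by have := INR_leq hb; rewrite INR_1.
set B := INR b in B1 *.
set g := (h e f (cur :|: [set v]) - h e f cur)%Re.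
have g0 : Rle 0 g by rewrite /g; have := h_mono f_mono (subsetUl cur [set v]); lra.
have Hg : forall u, Rle (h e f (cur :|: [set u]) - h e f cur) g.
  move=> u; case: (boolP (u \in cur)) => uc.
    by rewrite (setUidPl _) ?sub1set //; lra.
  by have := Hch u uc; rewrite /g; lra.
have Hs := sum_gain f_mono f_submod Hg (erefl #|Vs|).
have Hm := h_mono f_mono (subsetUr cur Vs).
have HB : Rle (INR #|Vs| * g) (B * g) by apply: Rmult_le_compat_r => //; exact: INR_leq.
have X : Rle ((h e f Vs - h e f cur) * / B) g.
  apply: (Rmult_le_reg_l B); first lra.
  have -> : (B * ((h e f Vs - h e f cur) * / B) = h e f Vs - h e f cur)%Re by field; lra.
  lra.
have r0 : Rle 0 (1 - / B).
  have : Rle (/ B) 1 by rewrite -Rinv_1; apply: Rinv_le_contravar; lra.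
  lra.
have Y := Rmult_le_compat_r _ _ _ r0 IH.
rewrite card_step // /=.
have -> : h e f (cur :|: [set v]) = (h e f cur + g)%Re by rewrite /g; ring.
move: X Y; move: (h e f Vs) (h e f cur) ((1 - / B) ^ #|cur|)%Re (Rinv B) => M c p iB X Y.
have E1 : ((M - c) * (1 - iB) = (M - c) - (M - c) * iB)%Re by ring.
have E2 : (p * M * (1 - iB) = (1 - iB) * (p * M))%Re by ring.
lra.
Qed.

End Greedy.

Theorem lemma4 (T : finType) (e : rel T)
  (e_sym : symmetric e) (e_irr : irreflexive e)
  (b k : nat) (hb : 1 <= b) (hk : 1 <= k)
  (f : {set {set T}} -> R)
  (f_nonneg : forall A : {set {set T}}, A \subset edges_x e -> Rle 0 (f A))
  (f_norm : f set0 = R0)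
  (f_mono : forall A B : {set {set T}}, B \subset edges_x e -> A \subset B -> Rle (f A) (f B))
  (f_submod : forall A B : {set {set T}}, A \subset edges_x e -> B \subset edges_x e ->
      Rle (Rplus (f (A :|: B)) (f (A :&: B))) (Rplus (f A) (f B)))
  (hDelta : 1 <= max_degree e)
  (Vgrd : {set T}) (hgrd : greedy_output e f b k Vgrd) :
  feasible e b k (edges_of e Vgrd) /\
  forall E, feasible e b k E ->
    Rle (Rmult (alpha_v b k (max_degree e)) (f E)) (f (edges_of e Vgrd)).
Proof.
case: hgrd => Hr Hstop.
have [cV cE] := reach_props Hr.
split.
  split; first exact: eo_sub.
  split=> //; exists Vgrd => // E0.
  by rewrite inE => /andP[_ /existsP[v /andP[vV vE]]]; exists v.
move=> E [Esub [_ [Vs cVs cov]]].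
have fEM : Rle (f E) (h e f Vs).
  apply: f_mono; first exact: eo_sub.
  apply/subsetP=> E0 E0E; rewrite inE (subsetP Esub) //=.
  by have [v vV vE] := cov E0 E0E; apply/existsP; exists v; rewrite vV.
have fE0 := f_nonneg _ Esub.
have M0 : Rle 0 (h e f Vs) by apply: f_nonneg; exact: eo_sub.
set D := max_degree e.
have B1 : Rle 1 (INR b) by have := INR_leq hb; rewrite INR_1.
set B := INR b in B1 *.
set m := Rmin 1 (INR (k %/ D) / B).
have m0 : Rle 0 m.
  apply: Rmin_glb; first lra.
  apply: Rmult_le_pos; first exact: pos_INR.
  by left; apply: Rinv_0_lt_compat; lra.
have al : alpha_v b k D = (1 - exp (- m))%Re by [].
have a1 : Rle (alpha_v b k D) 1 by rewrite al; have := exp_pos (- m); lra.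
have a0 : Rle 0 (alpha_v b k D).
  by rewrite al; have := exp_le' (Ropp_le_contravar _ _ m0); rewrite Ropp_0 exp_0; lra.
case: Hstop => [Hall | [v [[vn Hch] Hs]]].
  have -> : Vgrd = setT by apply/setP=> u; rewrite Hall inE.
  have := h_mono f_mono (subsetT Vs); rewrite /h.
  have a1' : Rle 0 (1 - alpha_v b k D) by lra.
  have := Rmult_le_pos _ _ a1' fE0.
  rewrite /h in fEM *; move: fEM; move: (alpha_v b k D) (f E) => a x H1 H2 H3; nra.
set t := #|Vgrd|.
have ht : Rle m (INR t / B).
  case: Hs => [Hb|Hk].
    have bt : (b <= t)%N by move: Hb; rewrite card_step.
    apply: Rle_trans (Rmin_l _ _) _.
    apply: (Rmult_le_reg_l B); first lra.
    have -> : (B * (INR t / B) = INR t)%Re by field; lra.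
    have := INR_leq bt; rewrite -/B; lra.
  have kt : (k %/ D <= t)%N.
    have := deg_all e_sym (erefl #|Vgrd :|: [set v]|); rewrite card_step // -/D => H.
    have kD : (k < t.+1 * D)%N by apply: leq_trans Hk H.
    by rewrite -ltnS ltn_divLR.
  apply: Rle_trans (Rmin_r _ _) _.
  apply: Rmult_le_compat_r; first by left; apply: Rinv_0_lt_compat; lra.
  exact: INR_leq.
have r0 : Rle 0 (1 - / B).
  have : Rle (/ B) 1 by rewrite -Rinv_1; apply: Rinv_le_contravar; lra.
  lra.
have P1 := pow_exp t (ltac:(lra) : Rlt 0 B) r0.
have P2 := exp_le' (Ropp_le_contravar _ _ ht).
have Hb := reach_bound f_norm f_mono f_submod hb cVs Hr.
rewrite -/B -/t in Hb.
have Q : Rle (alpha_v b k D) (1 - (1 - / B) ^ t) by rewrite al; lra.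
have Q1 := Rmult_le_compat_l _ _ _ a0 fEM.
have Q2 := Rmult_le_compat_r _ _ _ M0 Q.
rewrite /h in Q1 Q2 Hb *.
move: Q1 Q2 Hb; move: (alpha_v b k D) ((1 - / B) ^ t)%Re (f (edges_of e Vs)) (f E) => a p M x.
move=> Q1 Q2 Hb; nra.
Qed.
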